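(* Let $\varphi$ be an admissible order function and let $\Psi:(0,1]\to(0,\infty)$ be a function with $M_\varphi<m_\Psi$. Then there exists $C>0$ such that for every $0<r\le1$, $$\int_{\mathbb{R}^d}\frac{\Psi(|h|\wedge r)}{|h|^d\varphi(|h|)}\,dh\le C\frac{\Psi(r)}{\varphi(r)}.$$
   Context: $g:(0,1]\to(0,\infty)$ is almost increasing if $c\,g(r)\le g(R)$ for some $c\in(0,1]$ and all $0<r\le R\le1$, almost decreasing if $g(R)\le Cg(r)$ for some $C\ge1$ and all $0<r\le R\le1$. $M_g=\inf\{\alpha: g(r)/r^\alpha\text{ almost decreasing on }(0,1]\}$, $m_g=\sup\{\alpha: g(r)/r^\alpha\text{ almost increasing on }(0,1]\}$. An admissible order function is a smooth $\varphi:(0,\infty)\to(0,\infty)$, $\varphi(1)=1$, such that $\phi(r)=\varphi(r^{-1/2})^{-1}$ is a Bernstein function ($\phi\ge0$, $C^\infty$, $(-1)^n\phi^{(n)}\le0$ for $n\ge1$) and $a_1\lambda^{2\delta_1}\varphi(r)\le\varphi(\lambda r)\le a_2\lambda^{2\delta_2}\varphi(r)$ for all $\lambda\ge1,r>0$, for some $0<\delta_1\le\delta_2<1$, $a_1\in(0,1]$, $a_2\ge1$; $M_\varphi$ refers to the restriction of $\varphi$ to $(0,1]$. $|h|\wedge r=\min(|h|,r)$. *)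

(* Defs.v *)
From HB Require Import structures.
From mathcomp Require Import all_boot all_order all_algebra.
From mathcomp Require Import all_classical all_reals all_analysis.
Set Implicit Arguments. Unset Strict Implicit. Unset Printing Implicit Defensive.
Import Order.TTheory GRing.Theory Num.Theory.
Import numFieldNormedType.Exports.
Local Open Scope classical_set_scope.
Local Open Scope ring_scope.

Definition almost_increasing {R : realType} (g : R -> R) : Prop :=
  exists c : R, 0 < c /\ c <= 1 /\
    forall r s : R, 0 < r -> r <= s -> s <= 1 -> c * g r <= g s.

Definition almost_decreasing {R : realType} (g : R -> R) : Prop :=
  exists C : R, 1 <= C /\
    forall r s : R, 0 < r -> r <= s -> s <= 1 -> g s <= C * g r.

Definition upper_index {R : realType} (g : R -> R) : \bar R :=
  ereal_inf [set (a%:E)%E | a in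
    [set a : R | almost_decreasing (fun r => g r / r `^ a)]].

Definition lower_index {R : realType} (g : R -> R) : \bar R :=
  ereal_sup [set (a%:E)%E | a in
    [set a : R | almost_increasing (fun r => g r / r `^ a)]].

Definition nderive {R : realType} (n : nat) (f : R -> R) : R -> R :=
  iter n (fun g => derive1 g) f.

Definition smooth_pos {R : realType} (f : R -> R) : Prop :=
  forall (n : nat) (x : R), 0 < x -> derivable (nderive n f) x 1.

Definition bernstein {R : realType} (f : R -> R) : Prop :=
  (forall x : R, 0 < x -> 0 <= f x) /\ smooth_pos f /\
  (forall (n : nat) (x : R), (0 < n)%N -> 0 < x ->
     (-1) ^+ n * nderive n f x <= 0).

Definition admissible_order {R : realType} (phi : R -> R) : Prop :=
  (forall x : R, 0 < x -> 0 < phi x) /\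
  smooth_pos phi /\
  phi 1 = 1 /\
  bernstein (fun r : R => (phi (r `^ (- (1 / 2))))^-1) /\
  exists d1 d2 a1 a2 : R,
    0 < d1 /\ d1 <= d2 /\ d2 < 1 /\ 0 < a1 /\ a1 <= 1 /\ 1 <= a2 /\
    forall lam r : R, 1 <= lam -> 0 < r ->
      a1 * lam `^ (2 * d1) * phi r <= phi (lam * r) /\
      phi (lam * r) <= a2 * lam `^ (2 * d2) * phi r.

Definition enorm {R : realType} {d : nat} (h : d.-tuple R) : R :=
  Num.sqrt (\sum_(i < d) (tnth h i) ^+ 2).

(* Lebesgue integral over R^d of a function with values in \bar R,
   computed as the iterated integral dx_1 ... dx_d (Tonelli) *)
Fixpoint integral_Rd {R : realType} (d : nat) :
    (d.-tuple R -> \bar R) -> \bar R :=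
  match d return (d.-tuple R -> \bar R) -> \bar R with
  | 0 => fun f => f [tuple]
  | d'.+1 => fun f =>
      (\int[@lebesgue_measure R]_(x in [set: R])
         integral_Rd (fun t : d'.-tuple R => f (cons_tuple x t)))%E
  end.

(* Main.v *)
Require Import Defs.
From HB Require Import structures.
From mathcomp Require Import all_boot all_order all_algebra.
From mathcomp Require Import all_classical all_reals all_analysis.
From mathcomp Require Import measurable_realfun.
From mathcomp Require Import ring lra.
Import Order.TTheory GRing.Theory Num.Theory.
Import numFieldNormedType.Exports.
Local Open Scope classical_set_scope.
Local Open Scope ring_scope.
Section P1.
Context {R : realType}.
Local Open Scope ereal_scope.

Lemma le_int_nn (f g : R -> \bar R) : (forall x, 0 <= f x) -> (forall x, f x <= g x) ->
  \int[@lebesgue_measure R]_(x in [set: R]) f x <= \int[@lebesgue_measure R]_(x in [set: R]) g x.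
Proof.
move=> f0 fg.
have g0 x : 0 <= g x by apply: le_trans (fg x).
rewrite ge0_integralTE // ge0_integralTE //.
apply: le_ereal_sup => _ [h hf <-]; exists h => //= x.
exact: le_trans (fg x).
Qed.

End P1.
Section P1b.
Context {R : realType}.
Local Open Scope ereal_scope.

Lemma integral_Rd_ge0 d (f : d.-tuple R -> \bar R) : (forall t, 0 <= f t) -> 0 <= integral_Rd f.
Proof.
elim: d f => [|d IH] f f0 /=; first exact: f0.
apply: integral_ge0 => x _; apply: IH => t; exact: f0.
Qed.

Lemma integral_Rd_le d (f g : d.-tuple R -> \bar R) : (forall t, 0 <= f t) ->
  (forall t, f t <= g t) -> integral_Rd f <= integral_Rd g.
Proof.
elim: d f g => [|d IH] f g f0 fg /=; first exact: fg.
apply: le_int_nn => x; first by apply: integral_Rd_ge0 => t; exact: f0.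
by apply: IH => t; [exact: f0|exact: fg].
Qed.

Lemma integral_Rd0 d : integral_Rd (fun _ : d.-tuple R => 0) = 0.
Proof.
elim: d => [|d IH] //=.
by under eq_integral do rewrite IH; rewrite integral0.
Qed.

Lemma integral_Rd_prod (G : R -> \bar R) (J : R) : (forall x, 0 <= G x) ->
  measurable_fun [set: R] G -> (0 < J)%R ->
  \int[@lebesgue_measure R]_(x in [set: R]) G x <= J%:E ->
  forall d (c : R), (0 <= c)%R ->
  integral_Rd (fun t : d.-tuple R => c%:E * \prod_(i < d) G (tnth t i)) <= (c * J ^+ d)%:E.
Proof.
move=> G0 mG J0 IG; elim=> [|d IH] c c0.
  by rewrite /= big_ord0 mule1 expr0 mulr1.
have [->|cpos] := eqVneq c 0%R.
  rewrite mul0r; under [X in integral_Rd X]eq_fun do rewrite mul0e.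
  by rewrite integral_Rd0.
have cgt0 : (0 < c)%R by rewrite lt_neqAle eq_sym cpos.
rewrite /=.
have Jd0 : (0 < J ^+ d)%R by rewrite exprn_gt0.
apply: (@le_trans _ _ (\int[@lebesgue_measure R]_(x in [set: R]) ((c * J ^+ d)%:E * G x))).
  apply: le_int_nn => x.
    by apply: integral_Rd_ge0 => t; apply: mule_ge0; rewrite ?lee_fin//; apply: prode_ge0.
  under [X in integral_Rd X]eq_fun do rewrite big_ord_recl tnth0.
  under [X in integral_Rd X]eq_fun do (under eq_bigr do rewrite tnthS).
  move: (G0 x); case: (G x) => [g| |] g0; last by [].
    under [X in integral_Rd X]eq_fun do rewrite muleA -EFinM.
    apply: le_trans; first by apply: IH; rewrite mulr_ge0.
    by rewrite -EFinM lee_fin mulrAC.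
  by rewrite mulry gtr0_sg ?mulr_gt0// mul1e leey.
rewrite ge0_integralZl_EFin //; last by rewrite mulr_ge0// ltW.
rewrite exprSr mulrA [X in _ <= X]EFinM; apply: lee_wpmul2l => //.
by rewrite lee_fin mulr_ge0// ltW.
Qed.

End P1b.
Section P2.
Context {R : realType}.

Definition qh : R := 2^-1.
Definition cS (r e : R) k := r^-1 * (qh ^+ k.+1) `^ (e - 1).
Definition dS (r b : R) k := r^-1 * (2 ^+ k) `^ (-1 - b).
Definition symI (a : R) : set R := `[- a, a]%classic.
Definition AS (r : R) k : set R := symI (r * qh ^+ k).
Definition BS (r : R) k : set R := symI (r * 2 ^+ k.+1).
Definition tS r e b k x : \bar R :=
  ((cS r e k * \1_(AS r k) x)%:E + (dS r b k * \1_(BS r k) x)%:E)%E.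
Definition Sf r e b x : \bar R := (\sum_(k <oo) tS r e b k x)%E.

Lemma tS_ge0 r e b k x : 0 < r -> (0 <= tS r e b k x)%E.
Proof.
move=> r0; rewrite /tS adde_ge0// lee_fin mulr_ge0//
  /cS /dS ?mulr_ge0 ?powR_ge0 ?invr_ge0 ?ltW//.
Qed.

Lemma measurable_tS r e b k : measurable_fun [set: R] (tS r e b k).
Proof.
apply: emeasurable_funD; apply/measurable_EFinP;
  apply: measurable_funM => //; apply: measurable_indic; exact: measurable_itv.
Qed.

Lemma measurable_Sf r e b : 0 < r -> measurable_fun [set: R] (Sf r e b).
Proof.
move=> r0; apply: (@ge0_emeasurable_sum _ _ _ _ (fun k => tS r e b k) xpredT).
- by move=> k x _ _; exact: tS_ge0.
- by move=> k _; exact: measurable_tS.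
Qed.


Lemma leb_sym (a : R) : 0 <= a ->
  (@lebesgue_measure R (symI a) = (2 * a)%:E)%E.
Proof.
move=> a0; rewrite /symI lebesgue_measure_itv /= lte_fin.
have [a00|] := eqVneq a 0.
  by rewrite a00 oppr0 ltxx mulr0.
move=> an0; have ap : 0 < a by rewrite lt_neqAle eq_sym an0.
by rewrite gtrN// -EFinD opprK mulr2n mulrDl mul1r.
Qed.

Lemma int_sym (a : R) : 0 <= a ->
  (\int[@lebesgue_measure R]_(x in [set: R]) (\1_(symI a) x)%:E = (2 * a)%:E)%E.
Proof.
move=> a0; rewrite integral_indic//; last exact: measurable_itv.
rewrite setIT; exact: leb_sym.
Qed.

Lemma int_tS r e b k : 0 < r ->
  (\int[@lebesgue_measure R]_(x in [set: R]) tS r e b k x =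
   (cS r e k * (2 * (r * qh ^+ k)))%:E + (dS r b k * (2 * (r * 2 ^+ k.+1)))%:E)%E.
Proof.
move=> r0.
have c0 : 0 <= cS r e k by rewrite /cS mulr_ge0 ?powR_ge0 ?invr_ge0 ?ltW.
have d0 : 0 <= dS r b k by rewrite /dS mulr_ge0 ?powR_ge0 ?invr_ge0 ?ltW.
rewrite /tS ge0_integralD//; last 4 first.
- by move=> x _; rewrite lee_fin mulr_ge0.
- by apply/measurable_EFinP; apply: measurable_funM => //; apply: measurable_indic; exact: measurable_itv.
- by move=> x _; rewrite lee_fin mulr_ge0.
- by apply/measurable_EFinP; apply: measurable_funM => //; apply: measurable_indic; exact: measurable_itv.
under eq_integral do rewrite EFinM.
under [X in (_ + X)%E]eq_integral do rewrite EFinM.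
rewrite ge0_integralZl_EFin//; last by apply/measurable_EFinP; apply: measurable_indic; exact: measurable_itv.
rewrite ge0_integralZl_EFin//; last by apply/measurable_EFinP; apply: measurable_indic; exact: measurable_itv.
rewrite /AS /BS !int_sym ?EFinM//.
all: by rewrite /qh mulr_ge0 ?exprn_ge0 ?ltW ?invr_ge0.
Qed.


Lemma powRXn (a : R) n p : 0 <= a -> (a ^+ n) `^ p = (a `^ p) ^+ n.
Proof.
move=> a0; rewrite -powR_mulrn// -powRrM mulrC powRrM powR_mulrn//; exact: powR_ge0.
Qed.

Lemma powR_lt1 (a x : R) : 0 < a < 1 -> 0 < x -> a `^ x < 1.
Proof.
move=> /andP[a0 a1] x0; rewrite /powR gt_eqF// expR_lt1.
by rewrite pmulr_rlt0// ln_lt0// a0 a1.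
Qed.

Lemma qh_gt0 : 0 < qh. Proof. by rewrite /qh invr_gt0. Qed.
Lemma qh_lt1 : qh < 1. Proof. by rewrite /qh invf_lt1// ltr1n. Qed.

Lemma cS_term r e k : 0 < r -> 0 < e ->
  cS r e k * (2 * (r * qh ^+ k)) = 4 * (qh `^ e) ^+ k.+1.
Proof.
move=> r0 e0; rewrite /cS.
have -> : 2 * (r * qh ^+ k) = r * (4 * qh ^+ k.+1).
  by rewrite exprS /qh; field.
have key := @mulr_powRB1 _ (qh ^+ k.+1) e (exprn_ge0 _ (ltW qh_gt0)) e0.
rewrite -powRXn ?(ltW qh_gt0)// -key.
by field; rewrite gt_eqF.
Qed.

Lemma dS_term r b k : 0 < r ->
  dS r b k * (2 * (r * 2 ^+ k.+1)) = 4 * (2 `^ (- b)) ^+ k.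
Proof.
move=> r0; rewrite /dS.
have -> : 2 * (r * 2 ^+ k.+1) = r * (4 * 2 ^+ k).
  by rewrite exprS; ring.
have h2 : (2 ^+ k : R) != 0 by rewrite expf_neq0.
rewrite powRD; last by rewrite h2 implybT.
rewrite powR_inv1 ?exprn_ge0// -powRXn//.
by field; rewrite h2 gt_eqF.
Qed.

Lemma geo_le (x : R) n : 0 <= x < 1 -> \sum_(i < n) x ^+ i <= (1 - x)^-1.
Proof.
move=> /andP[x0 x1]; have h : 0 < 1 - x by rewrite subr_gt0.
rewrite -div1r ler_pdivlMr//.
have -> : (\sum_(i < n) x ^+ i) * (1 - x) = 1 - x ^+ n.
  by rewrite -[RHS]opprB subrX1; ring.
by rewrite lerBlDr lerDl exprn_ge0.
Qed.


Lemma int_Sf r e b : 0 < r -> 0 < e -> 0 < b ->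
  (\int[@lebesgue_measure R]_(x in [set: R]) Sf r e b x <=
   (4 * (1 - qh `^ e)^-1 + 4 * (1 - 2 `^ (- b))^-1)%:E)%E.
Proof.
move=> r0 e0 b0.
have rho0 : 0 <= qh `^ e < 1.
  by rewrite powR_ge0 powR_lt1// qh_gt0 qh_lt1.
have sig0 : 0 <= 2 `^ (- b) < 1.
  rewrite powR_ge0 /= /powR gt_eqF// expR_lt1 mulNr oppr_lt0 mulr_gt0// ln_gt0//.
  by rewrite ltr1n.
rewrite /Sf integral_nneseries//; last 2 first.
- by move=> k; exact: measurable_tS.
- by move=> k x _; exact: tS_ge0.
rewrite (@eq_eseriesr _ _ (fun k => (4 * (qh `^ e) ^+ k.+1)%:E + (4 * (2 `^ (- b)) ^+ k)%:E)%E); last first.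
  by move=> k _; rewrite int_tS// cS_term// dS_term.
apply: (@le_trans _ _ (\sum_(k <oo) ((4 * (qh `^ e) ^+ k + 4 * (2 `^ (- b)) ^+ k)%:E))%E).
  apply: lee_nneseries.
    move=> k _ _; case/andP: rho0 => r1 _; case/andP: sig0 => s1 _.
    by rewrite adde_ge0// lee_fin mulr_ge0// exprn_ge0.
  move=> k _; rewrite -EFinD lee_fin lerD2r ler_pM2l// exprS ger_pMl.
    by case/andP: rho0 => _ /ltW.
  by rewrite exprn_gt0// powR_gt0// qh_gt0.
apply: lime_le.
  apply: is_cvg_nneseries => k _ _; case/andP: rho0 => r1 _; case/andP: sig0 => s1 _.
  by rewrite lee_fin addr_ge0// mulr_ge0// exprn_ge0.
apply: nearW => n; rewrite sumEFin lee_fin.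
rewrite big_mkord big_split /= -!mulr_sumr.
by rewrite lerD// ler_pM2l// geo_le.
Qed.


Lemma powR_anti (a c p : R) : 0 < a -> a <= c -> p <= 0 -> c `^ p <= a `^ p.
Proof.
move=> a0 ac p0; have c0 : 0 < c by apply: lt_le_trans ac.
rewrite /powR !gt_eqF// ler_expR ler_wnM2l// ler_ln//.
Qed.

Lemma tS_le_Sf r e b k x : 0 < r -> (tS r e b k x <= Sf r e b x)%E.
Proof.
move=> r0; apply: le_trans (nneseries_lim_ge k.+1 _); last by move=> n _ _; exact: tS_ge0.
rewrite big_nat_recr//= leeDr//; apply: sume_ge0 => n _; exact: tS_ge0.
Qed.

Lemma dyadic_down (y : R) n : qh ^+ n < y -> y <= 1 ->
  exists k, qh ^+ k.+1 < y /\ y <= qh ^+ k.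
Proof.
elim: n => [|n IH]; first by rewrite expr0 => /lt_le_trans h /h; rewrite ltxx.
move=> hn y1; have [yn|yn] := leP y (qh ^+ n); first by exists n.
exact: IH.
Qed.

Lemma dyadic_up (y : R) n : 1 < y -> y <= 2 ^+ n ->
  exists k, 2 ^+ k < y /\ y <= 2 ^+ k.+1.
Proof.
elim: n => [|n IH]; first by rewrite expr0 => /lt_le_trans h /h; rewrite ltxx.
move=> y1 hn; have [yn|yn] := leP y (2 ^+ n); first exact: IH.
by exists n.
Qed.

Lemma nat_lt_2exp n : (n%:R : R) < 2 ^+ n.
Proof. by rewrite -natrX ltr_nat ltn_expl. Qed.

Lemma exists_qh (y : R) : 0 < y -> exists n, qh ^+ n < y.
Proof.
move=> y0; have yi : 0 < y^-1 by rewrite invr_gt0.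
have := archi_boundP (ltW yi) => h.
exists (Num.bound y^-1); rewrite /qh exprVn -[y in _ < y]invrK ltf_pV2 ?posrE ?invr_gt0 ?exprn_gt0//.
exact: lt_trans h (nat_lt_2exp _).
Qed.

Lemma exists_2 (y : R) : 0 < y -> exists n, y <= 2 ^+ n.
Proof.
move=> y0; have := archi_boundP (ltW y0) => h.
exists (Num.bound y); apply/ltW; exact: lt_trans h (nat_lt_2exp _).
Qed.

Lemma Sf_low1 r e b x : 0 < r -> e <= 1 -> 0 < `|x| -> `|x| <= r ->
  ((r^-1 * (`|x| / r) `^ (e - 1))%:E <= Sf r e b x)%E.
Proof.
move=> r0 e1 x0 xr.
have y0 : 0 < `|x| / r by rewrite divr_gt0.
have y1 : `|x| / r <= 1 by rewrite ler_pdivrMr// mul1r.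
have [n hn] := exists_qh _ y0.
have [k [hk1 hk2]] := dyadic_down _ _ hn y1.
apply: le_trans (tS_le_Sf _ _ _ k _ r0).
have xA : x \in AS r k.
  rewrite /AS /symI inE /= in_itv /= -ler_norml.
  by rewrite -ler_pdivrMl// mulrC.
rewrite /tS indicE xA mulr1 -[X in (X <= _)%E]adde0 leeD//; last first.
  by rewrite lee_fin mulr_ge0 ?indicE ?ler0n// /dS mulr_ge0 ?powR_ge0// invr_ge0 ltW.
rewrite lee_fin /cS ler_pM2l ?invr_gt0//.
apply: powR_anti; [by rewrite exprn_gt0// qh_gt0| exact: ltW|by rewrite subr_le0].
Qed.

Lemma Sf_low2 r e b x : 0 < r -> 0 < b -> r < `|x| ->
  ((r^-1 * (`|x| / r) `^ (-1 - b))%:E <= Sf r e b x)%E.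
Proof.
move=> r0 b0 xr.
have y1 : 1 < `|x| / r by rewrite ltr_pdivlMr// mul1r.
have [n hn] := exists_2 _ (lt_trans ltr01 y1).
have [k [hk1 hk2]] := dyadic_up _ _ y1 hn.
apply: le_trans (tS_le_Sf _ _ _ k _ r0).
have xB : x \in BS r k.
  rewrite /BS /symI inE /= in_itv /= -ler_norml.
  by rewrite -ler_pdivrMl// mulrC.
rewrite /tS [in X in (_ + X)%E]indicE xB mulr1 -[X in (X <= _)%E]add0e leeD//.
  by rewrite lee_fin mulr_ge0 ?indicE ?ler0n// /cS mulr_ge0 ?powR_ge0// invr_ge0 ltW.
rewrite lee_fin /dS ler_pM2l ?invr_gt0//.
apply: powR_anti; [by rewrite exprn_gt0| exact: ltW|].
lra.
Qed.


Definition wf (e b u : R) := Num.min (u `^ (e - 1)) (u `^ (-1 - b)).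

Lemma wf_gt0 e b u : 0 < u -> 0 < wf e b u.
Proof. by move=> u0; rewrite /wf lt_min !powR_gt0. Qed.

Lemma Sf_low r e b x y : 0 < r -> e <= 1 -> 0 < b -> 0 < `|x| -> `|x| <= y ->
  ((r^-1 * wf e b (y / r))%:E <= Sf r e b x)%E.
Proof.
move=> r0 e1 b0 x0 xy.
have xr0 : 0 < `|x| / r by rewrite divr_gt0.
have xry : `|x| / r <= y / r by rewrite ler_pM2r ?invr_gt0.
have [xr|xr] := leP `|x| r.
  apply: le_trans (Sf_low1 _ _ _ _ r0 e1 x0 xr).
  rewrite lee_fin ler_pM2l ?invr_gt0// /wf ge_min; apply/orP; left.
  by apply: powR_anti => //; rewrite subr_le0.
apply: le_trans (Sf_low2 _ e _ _ r0 b0 xr).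
rewrite lee_fin ler_pM2l ?invr_gt0// /wf ge_min; apply/orP; right.
by apply: powR_anti => //; lra.
Qed.

Lemma Sf0 r e b : 0 < r -> e <= 1 -> Sf r e b 0 = +oo%E.
Proof.
move=> r0 e1.
have t1 k : ((r^-1)%:E <= tS r e b k 0)%E.
  have x0 : (0 : R) \in AS r k.
    by rewrite /AS /symI inE /= in_itv /= oppr_le0 andbb mulr_ge0 ?ltW ?exprn_gt0 ?qh_gt0.
  rewrite /tS indicE x0 mulr1 -[X in (X <= _)%E]adde0 leeD//; last first.
    by rewrite lee_fin mulr_ge0 ?indicE ?ler0n// /dS mulr_ge0 ?powR_ge0// invr_ge0 ltW.
  rewrite lee_fin /cS -[X in X <= _]mulr1 ler_pM2l ?invr_gt0//.
  have h1 : (1 : R) = 1 `^ (e - 1) by rewrite powR1.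
  rewrite [X in X <= _]h1; apply: powR_anti; first by rewrite exprn_gt0// qh_gt0.
    by rewrite exprn_ile1// ltW ?qh_gt0 ?qh_lt1.
  by rewrite subr_le0.
have part n : ((n%:R * r^-1)%:E <= Sf r e b 0)%E.
  apply: le_trans (nneseries_lim_ge n _); last by move=> m _ _; exact: tS_ge0.
  elim: n => [|n IH]; first by rewrite mul0r big_geq.
  rewrite big_nat_recr//= -natr1 mulrDl mul1r EFinD leeD//.
have : (0 <= Sf r e b 0)%E by apply: le_trans (part 0%N); rewrite mul0r.
case E: (Sf r e b 0) => [s| |] //= s0.
have s00 : (0 <= s)%R by exact: s0.
have si : 0 <= s * r := mulr_ge0 s00 (ltW r0).
have := archi_boundP si => hb.
have := part (Num.bound (s * r)); rewrite E lee_fin ler_pdivrMr// => h.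
by have := lt_le_trans hb h; rewrite ltxx.
Qed.

End P2.
Section P3.
Context {R : realType}.

Lemma powR_pow_mul (u x : R) n : 0 <= u -> (u `^ x) ^+ n = u `^ (x * n%:R).
Proof. by move=> u0; rewrite powRrM powR_mulrn// powR_ge0. Qed.

Lemma L1 (s r e : R) n : 0 < s -> 0 < r ->
  (r^-1 * (s / r) `^ (e - 1)) ^+ n = (s / r) `^ (e * n%:R) / s ^+ n.
Proof.
move=> s0 r0; set u := s / r.
have u0 : 0 < u by rewrite divr_gt0.
rewrite powRD; last by apply/implyP => _; rewrite gt_eqF.
rewrite powR_inv1 ?ltW// -powR_pow_mul ?ltW//.
have -> : r^-1 * (u `^ e * u^-1) = u `^ e / s.
  by rewrite /u; field; rewrite !gt_eqF.
by rewrite exprMn exprVn.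
Qed.

Lemma L2 (s r b t : R) n : 0 < s -> 0 < r -> b * n%:R = t ->
  (r^-1 * (s / r) `^ (-1 - b)) ^+ n = (s ^+ n * (s / r) `^ t)^-1.
Proof.
move=> s0 r0 bt; set u := s / r.
have u0 : 0 < u by rewrite divr_gt0.
rewrite powRD; last by apply/implyP => _; rewrite gt_eqF.
rewrite powR_inv1 ?ltW//.
have -> : r^-1 * (u^-1 * u `^ (- b)) = u `^ (- b) / s.
  by rewrite /u; field; rewrite !gt_eqF.
rewrite exprMn exprVn powR_pow_mul ?ltW// mulNr bt powRN invfM mulrC.
done.
Qed.


Lemma core (phi Psi : R -> R) (al be C1 c2 a1 d1 : R) (n : nat) (r s : R) :
  (0 < n)%N -> (forall x, 0 < x -> 0 < phi x) ->
  (forall x, 0 < x -> x <= 1 -> 0 < Psi x) ->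
  0 < a1 ->
  (forall lam r, 1 <= lam -> 0 < r -> a1 * lam `^ (2 * d1) * phi r <= phi (lam * r)) ->
  (forall t v, 0 < t -> t <= v -> v <= 1 -> phi v / v `^ al <= C1 * (phi t / t `^ al)) ->
  0 < c2 ->
  (forall t v, 0 < t -> t <= v -> v <= 1 -> c2 * (Psi t / t `^ be) <= Psi v / v `^ be) ->
  al < be -> 0 < d1 -> 1 <= C1 ->
  0 < r -> r <= 1 -> 0 < s ->
  Psi (Num.min s r) / (s ^+ n * phi s) <=
  (C1 / c2 + a1^-1) * (Psi r / phi r) *
  (r^-1 * wf (Num.min (be - al) 1 / n%:R) (2 * d1 / n%:R) (s / r)) ^+ n.
Proof.
move=> n0 phi0 Psi0 a10 scal Idec c20 Iinc ab d10 C11 r0 r1 s0.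
set e := Num.min (be - al) 1 / n%:R.
set b := 2 * d1 / n%:R.
have nR : (0 : R) < n%:R by rewrite ltr0n.
have e0 : 0 < e by rewrite divr_gt0// lt_min subr_gt0 ab ltr01.
have b0 : 0 < b by rewrite divr_gt0// mulr_gt0.
have en : e * n%:R = Num.min (be - al) 1 by rewrite /e mulfVK// gt_eqF.
have bn : b * n%:R = 2 * d1 by rewrite /b mulfVK// gt_eqF.
set u := s / r.
have u0 : 0 < u by rewrite divr_gt0.
have us : u * r = s by rewrite /u mulfVK// gt_eqF.
have P0 : 0 < Psi r / phi r by rewrite divr_gt0 ?phi0 ?Psi0.
have K1 : C1 / c2 <= C1 / c2 + a1^-1 by rewrite lerDl invr_ge0 ltW.
have K2 : a1^-1 <= C1 / c2 + a1^-1 by rewrite lerDr divr_ge0 ?ltW// (lt_le_trans ltr01).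
have sn0 : 0 < s ^+ n by rewrite exprn_gt0.
have [sr|sr] := leP s r.
- have u1 : u <= 1 by rewrite /u ler_pdivrMr// mul1r.
  have -> : wf e b u = u `^ (e - 1).
    rewrite /wf min_l//; apply: ger_powR; first by rewrite u0 u1.
    lra.
  rewrite L1// -/u en.
  have Ps0 : 0 < Psi s by apply: Psi0 => //; apply: le_trans r1.
  have Ys0 : 0 < phi s by apply: phi0.
  have -> : Psi s / (s ^+ n * phi s) = (Psi s / phi s) * (s ^+ n)^-1.
    by field; rewrite !gt_eqF.
  rewrite mulrA ler_pM2r ?invr_gt0//.
  apply: (@le_trans _ _ (C1 / c2 * (Psi r / phi r) * u `^ (be - al))); last first.
    have C10' : 0 < C1 / c2 by rewrite divr_gt0// (lt_le_trans ltr01).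
    apply: ler_pM.
    - by rewrite mulr_ge0 ?ltW.
    - exact: powR_ge0.
    - by rewrite ler_pM2r.
    apply: ger_powR; first by rewrite u0 u1.
    by rewrite ge_min lexx.
  have hI := Idec s r s0 sr r1.
  have hII := Iinc s r s0 sr r1.
  have Sa : 0 < s `^ al by rewrite powR_gt0.
  have Sb : 0 < s `^ be by rewrite powR_gt0.
  have Ra : 0 < r `^ al by rewrite powR_gt0.
  have Rb : 0 < r `^ be by rewrite powR_gt0.
  have Yr : 0 < phi r by apply: phi0.
  have Xr : 0 < Psi r by apply: Psi0.
  have C10 : 0 < C1 by apply: lt_le_trans C11.
  have ux x : u `^ x = s `^ x / r `^ x.
    by rewrite -us powRM ?ltW// mulfK// gt_eqF// powR_gt0.
  rewrite powRB; last by apply/implyP => _; rewrite gt_eqF.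
  rewrite !ux.
  have hY : phi r * s `^ al / (C1 * r `^ al) <= phi s.
    have -> : phi r * s `^ al / (C1 * r `^ al) = (phi r / r `^ al) * (s `^ al / C1).
      by field; rewrite !gt_eqF.
    apply: (@le_trans _ _ (C1 * (phi s / s `^ al) * (s `^ al / C1))).
      by rewrite ler_pM2r ?divr_gt0.
    by rewrite le_eqVlt; apply/orP; left; apply/eqP; field; rewrite !gt_eqF.
  have hX : Psi s <= Psi r * s `^ be / (c2 * r `^ be).
    have -> : Psi s = c2 * (Psi s / s `^ be) * (s `^ be / c2) by field; rewrite !gt_eqF.
    have -> : Psi r * s `^ be / (c2 * r `^ be) = Psi r / r `^ be * (s `^ be / c2).
      by field; rewrite !gt_eqF.
    by rewrite ler_pM2r ?divr_gt0.
  apply: (@le_trans _ _ ((Psi r * s `^ be / (c2 * r `^ be)) / phi s)).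
    by rewrite ler_pM2r ?invr_gt0.
  apply: (@le_trans _ _ ((Psi r * s `^ be / (c2 * r `^ be)) / (phi r * s `^ al / (C1 * r `^ al)))).
    rewrite ler_pM2l ?divr_gt0 ?mulr_gt0//.
    by rewrite lef_pV2 ?posrE ?divr_gt0 ?mulr_gt0.
  by rewrite le_eqVlt; apply/orP; left; apply/eqP; field; rewrite !gt_eqF.
- have u1 : 1 < u by rewrite /u ltr_pdivlMr// mul1r.
  have -> : wf e b u = u `^ (-1 - b).
    rewrite /wf min_r//; apply: ler_powR; first exact: ltW.
    lra.
  rewrite (L2 _ _ _ _ _ s0 r0 bn) -/u.
  have Yr : 0 < phi r by apply: phi0.
  have Xr : 0 < Psi r by apply: Psi0.
  have U0 : 0 < u `^ (2 * d1) by rewrite powR_gt0.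
  have hY : a1 * u `^ (2 * d1) * phi r <= phi s by rewrite -us; apply: scal => //; exact: ltW.
  apply: (@le_trans _ _ (Psi r / (s ^+ n * (a1 * u `^ (2 * d1) * phi r)))).
    rewrite ler_pM2l// lef_pV2 ?posrE ?mulr_gt0 ?phi0// ler_pM2l//.
  apply: (@le_trans _ _ (a1^-1 * (Psi r / phi r) * (s ^+ n * u `^ (2 * d1))^-1)).
    by rewrite le_eqVlt; apply/orP; left; apply/eqP; field; rewrite !gt_eqF.
  by rewrite ler_pM2r ?invr_gt0 ?mulr_gt0// ler_pM2r.
Qed.

End P3.
Section P4.
Context {R : realType}.

Lemma lee_prod_ord n (f g : 'I_n -> \bar R) :
  (forall i, (0 <= f i)%E) -> (forall i, (f i <= g i)%E) ->
  (\prod_(i < n) f i <= \prod_(i < n) g i)%E.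
Proof.
move=> f0 fg.
suff : (0 <= \prod_(i < n) f i)%E /\ (\prod_(i < n) f i <= \prod_(i < n) g i)%E by case.
apply: (big_ind2 (fun x y => (0 <= x)%E /\ (x <= y)%E)).
- by split.
- move=> x1 x2 y1 y2 [x10 xy] [y10 yy]; split; first exact: mule_ge0.
  exact: lee_pmul.
- move=> i _; split; [exact: f0|exact: fg].
Qed.

Lemma tnth_le_enorm d (t : d.-tuple R) i : `|tnth t i| <= enorm t.
Proof.
rewrite /enorm -sqrtr_sqr; apply: ler_wsqrtr.
rewrite (bigD1 i)//= lerDl; apply: sumr_ge0 => j _; exact: sqr_ge0.
Qed.

End P4.

Theorem lemma4p2 (R : realType) (d : nat) (phi Psi : R -> R) :
  (0 < d)%N ->
  admissible_order phi ->
  (forall r : R, 0 < r -> r <= 1 -> 0 < Psi r) ->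
  (upper_index phi < lower_index Psi)%E ->
  exists C : R, 0 < C /\
    forall r : R, 0 < r -> r <= 1 ->
      (integral_Rd (fun h : d.-tuple R =>
         (Psi (Num.min (enorm h) r) / (enorm h ^+ d * phi (enorm h)))%:E)
       <= (C * (Psi r / phi r))%:E)%E.
Proof.
move=> d0 [phi0 [_ [_ [_ [d1 [d2 [a1 [a2 [d10 [_ [_ [a10 [_ [_ scale]]]]]]]]]]]]]] Psi0 hidx.
have scal lam r : 1 <= lam -> 0 < r -> a1 * lam `^ (2 * d1) * phi r <= phi (lam * r).
  by move=> l1 r0; case: (scale lam r l1 r0).
have [y [al Sal <-] ylt] := ereal_inf_lt hidx.
have [z [be Sbe <-] ablt] := ereal_sup_gt ylt.
rewrite lte_fin in ablt.
case: Sal => C1 [C11 Idec].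
case: Sbe => c2 [c20 [_ Iinc]].
set e := Num.min (be - al) 1 / d%:R.
set b := 2 * d1 / d%:R.
have nR : (0 : R) < d%:R by rewrite ltr0n.
have e0 : 0 < e by rewrite divr_gt0// lt_min subr_gt0 ablt ltr01.
have e1 : e <= 1.
  by rewrite /e ler_pdivrMr// mul1r ge_min; apply/orP; right; rewrite ler1n.
have b0 : 0 < b by rewrite divr_gt0// mulr_gt0.
set J := 4 * (1 - qh `^ e)^-1 + 4 * (1 - 2 `^ (- b))^-1.
have J0 : 0 < J.
  have r1 : 0 < 1 - qh `^ e by rewrite subr_gt0 powR_lt1// qh_gt0 qh_lt1.
  have s1 : 0 < 1 - 2 `^ (- b).
    rewrite subr_gt0 /powR gt_eqF// expR_lt1 mulNr oppr_lt0 mulr_gt0// ln_gt0//.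
    by rewrite ltr1n.
  by rewrite addr_gt0// mulr_gt0// invr_gt0.
set K := C1 / c2 + a1^-1.
have K0 : 0 < K by rewrite addr_gt0 ?invr_gt0// divr_gt0// (lt_le_trans ltr01).
exists (K * J ^+ d); split; first by rewrite mulr_gt0// exprn_gt0.
move=> r r0 r1.
set P := Psi r / phi r.
have P0 : 0 < P by rewrite divr_gt0 ?phi0 ?Psi0.
have KP0 : 0 <= K * P by rewrite mulr_ge0 ?ltW.
have -> : K * J ^+ d * P = K * P * J ^+ d by ring.
apply: le_trans; last first.
  apply: (@integral_Rd_prod _ (Sf r e b)) => //.
  - by move=> x; apply: nneseries_ge0 => k _ _; exact: tS_ge0.
  - exact: measurable_Sf.
  - exact: int_Sf.
apply: integral_Rd_le.
  move=> t; rewrite lee_fin.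
  have s0 : 0 <= enorm t by exact: sqrtr_ge0.
  rewrite le_eqVlt in s0; case/orP: s0 => [/eqP <-|s0].
    by rewrite expr0n gtn_eqF// mul0r invr0 mulr0.
  apply: divr_ge0; first by apply/ltW/Psi0; [rewrite lt_min s0 r0|rewrite ge_min r1 orbT].
  by rewrite mulr_ge0// ?exprn_ge0 ?ltW ?phi0.
move=> t.
have s0 : 0 <= enorm t by exact: sqrtr_ge0.
rewrite le_eqVlt in s0; case/orP: s0 => [/eqP <-|s0].
  rewrite expr0n gtn_eqF// mul0r invr0 mulr0.
  by apply: mule_ge0; [rewrite lee_fin| apply: prode_ge0 => i _; apply: nneseries_ge0 => k _ _; exact: tS_ge0].
have hc := @core R phi Psi al be C1 c2 a1 d1 d r (enorm t) d0 phi0 Psi0 a10 scal Idec c20 Iinc ablt d10 C11 r0 r1 s0.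
rewrite -lee_fin in hc.
apply: le_trans hc _.
rewrite -/e -/b -/K -/P EFinM.
apply: lee_wpmul2l; first by rewrite lee_fin.
set x := r^-1 * wf e b (enorm t / r).
have x0 : 0 < x by rewrite mulr_gt0 ?invr_gt0// wf_gt0// divr_gt0.
have -> : ((x ^+ d)%:E = \prod_(i < d) x%:E)%E.
  by rewrite prodEFin prodr_const card_ord.
apply: lee_prod_ord => i; first by rewrite lee_fin ltW.
have [ti0|ti0] := eqVneq (tnth t i) 0.
  by rewrite ti0 Sf0// leey.
apply: Sf_low => //; last exact: tnth_le_enorm.
by rewrite normr_gt0.
Qed.
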